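(* Let $\mathcal{A}$ be a primal algebra and let $<$ be a linear order on its universe $A$. Then the category $\mathbf{OV}_{\mathit{fin}}(\mathcal{A},<)$ is equivalent to the category $\mathbf{OFBA}$.
   Context: A primal algebra is a finite algebra with at least two elements in which every finitary operation on its universe is a term operation. For a linear order $<$ on $A$ and a positive integer $n$, the antilexicographic order $\sqsubset$ on $A^n$ is: $(x_1,\dots,x_n)\sqsubset(y_1,\dots,y_n)$ iff there is $s$ with $x_t=y_t$ for all $t>s$ and $x_s<y_s$. For a permutation $\pi$ of $\{1,\dots,n\}$, $\bar x\sqsubset_\pi\bar y$ iff $(x_{\pi(1)},\dots,x_{\pi(n)})\sqsubset(y_{\pi(1)},\dots,y_{\pi(n)})$; $\sqsubseteq_\pi$ is its reflexive version, and $\mathcal{A}^n_{\sqsubseteq_\pi}$ is the power algebra $\mathcal{A}^n$ expanded by $\sqsubseteq_\pi$. $\mathbf{OV}_{\mathit{fin}}(\mathcal{A},<)$ is the category whose objects are all structures isomorphic to some $\mathcal{A}^n_{\sqsubseteq_\pi}$ ($n$ a positive integer, $\pi$ a permutation of $\{1,\dots,n\}$) and whose morphisms are embeddings (injective maps preserving the algebra operations and preserving and reflecting the order relation). For a finite boolean algebra $\mathcal{B}$ with atoms $a_1,\dots,a_n$ and a linear order on the atoms $a_{i_1}<\dots<a_{i_n}$, write each element as $\delta_1 a_{i_1}\lor\dots\lor\delta_n a_{i_n}$ with $\delta_s\in\{0,1\}$ ($0\cdot b=0$, $1\cdot b=b$); the antilexicographic order sets $x\sqsubset y$ iff for the coefficient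 vectors $(\delta_s)$ of $x$ and $(\epsilon_s)$ of $y$ there is $s$ with $\delta_s<\epsilon_s$ and $\delta_t=\epsilon_t$ for all $t>s$. A linear order on $\mathcal{B}$ is natural if it arises this way from some linear order of the atoms. $\mathbf{OFBA}$ is the category whose objects are finite boolean algebras expanded by a natural linear order, and whose morphisms are embeddings (injective boolean homomorphisms preserving and reflecting the order). *)

(* Defs.v *)
From HB Require Import structures.
From mathcomp Require Import all_boot all_order all_fingroup.
From Stdlib Require Import FunctionalExtensionality ProofIrrelevance.
Set Implicit Arguments. Unset Strict Implicit. Unset Printing Implicit Defensive.
Import Order.TTheory.

Record Category := Cat {
  ob : Type;
  hom : ob -> ob -> Type;
  idm : forall a, hom a a;
  comp : forall a b c, hom b c -> hom a b -> hom a c;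
  comp_id_l : forall a b (f : hom a b), comp (idm b) f = f;
  comp_id_r : forall a b (f : hom a b), comp f (idm a) = f;
  comp_assoc : forall a b c d (h : hom c d) (g : hom b c) (f : hom a b),
      comp h (comp g f) = comp (comp h g) f }.
Arguments hom {C} a b : rename.
Arguments idm {C} a : rename.
Arguments comp {C a b c} g f : rename.

Record Functor (C D : Category) := Fun {
  fob : ob C -> ob D;
  fmap : forall a b, hom a b -> hom (fob a) (fob b);
  fmap_id : forall a, fmap (idm a) = idm (fob a);
  fmap_comp : forall a b c (g : hom b c) (f : hom a b),
      fmap (comp g f) = comp (fmap g) (fmap f) }.
Arguments fob {C D} F a : rename.
Arguments fmap {C D} F {a b} f : rename.

Definition is_iso (C : Category) (a b : ob C) (f : hom a b) : Prop :=
  exists g : hom b a, comp g f = idm a /\ comp f g = idm b.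

Definition cat_equivalent (C D : Category) : Prop :=
  exists (F : Functor C D) (G : Functor D C),
    (exists eta : forall a : ob C, hom a (fob G (fob F a)),
        (forall a b (f : hom a b),
            comp (fmap G (fmap F f)) (eta a) = comp (eta b) f) /\
        (forall a, is_iso (eta a))) /\
    (exists eps : forall b : ob D, hom (fob F (fob G b)) b,
        (forall a b (f : hom a b),
            comp (eps b) (fmap F (fmap G f)) = comp f (eps a)) /\
        (forall b, is_iso (eps b))).

Lemma sig_fun_eq (X Y : Type) (P : (X -> Y) -> Prop) (f g : {h : X -> Y | P h}) :
  (forall x, proj1_sig f x = proj1_sig g x) -> f = g.
Proof.
case: f g => [f pf] [g pg] /= E.
have efg : f = g by apply: functional_extensionality.
subst g; by rewrite (proof_irrelevance _ pf pg).
Qed.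

Section UA.
Variables (Op : Type) (ar : Op -> nat).

Definition ops_on (T : Type) := forall o : Op, ('I_(ar o) -> T) -> T.

Inductive term (n : nat) : Type :=
| Var : 'I_n -> term n
| App : forall o : Op, ('I_(ar o) -> term n) -> term n.

Fixpoint term_eval (T : Type) (opsT : ops_on T) (n : nat) (t : term n)
    (x : 'I_n -> T) : T :=
  match t with
  | Var i => x i
  | App o ts => opsT o (fun j => term_eval opsT (ts j) x)
  end.

Definition primal (A : finType) (opsA : ops_on A) : Prop :=
  1 < #|A| /\
  forall (n : nat) (f : ('I_n -> A) -> A), 0 < n ->
    exists t : term n, forall x, term_eval opsA t x = f x.

Definition preserves_ops (X Y : Type) (opsX : ops_on X) (opsY : ops_on Y)
    (f : X -> Y) : Prop :=
  forall o (args : 'I_(ar o) -> X), f (opsX o args) = opsY o (fun j => f (args j)).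

Definition pow_ops (A : Type) (opsA : ops_on A) (n : nat) :
    ops_on {ffun 'I_n -> A} :=
  fun o args => [ffun i => opsA o (fun j => args j i)].

Definition strict_linear (A : eqType) (lt : rel A) : Prop :=
  irreflexive lt /\ transitive lt /\ (forall x y, x != y -> lt x y || lt y x).

Definition antilex_le (A : Type) (lt : A -> A -> bool) (n : nat) (pi : 'S_n)
    (x y : {ffun 'I_n -> A}) : Prop :=
  x = y \/
  exists s : 'I_n, lt (x (pi s)) (y (pi s)) /\
     forall t : 'I_n, s < t -> x (pi t) = y (pi t).

Variables (A : finType) (opsA : ops_on A) (ltA : rel A).

Record OVobj := OVObj {
  ov_car : Type;
  ov_ops : ops_on ov_car;
  ov_le : ov_car -> ov_car -> Prop;
  ov_iso : exists (n : nat) (pi : 'S_n) (phi : ov_car -> {ffun 'I_n -> A}),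
      0 < n /\ bijective phi /\ preserves_ops ov_ops (@pow_ops _ opsA n) phi /\
      (forall x y, ov_le x y <-> antilex_le ltA pi (phi x) (phi y)) }.

Definition ov_embedding (X Y : OVobj) (f : ov_car X -> ov_car Y) : Prop :=
  injective f /\ preserves_ops (@ov_ops X) (@ov_ops Y) f /\
  (forall x y, ov_le x y <-> ov_le (f x) (f y)).

Definition OVhom (X Y : OVobj) := {f : ov_car X -> ov_car Y | ov_embedding f}.

Definition OVid (X : OVobj) : OVhom X X.
Proof.
exists id; split; first by move=> x y.
by split=> //.
Defined.

Definition OVcomp (X Y Z : OVobj) (g : OVhom Y Z) (f : OVhom X Y) : OVhom X Z.
Proof.
exists (proj1_sig g \o proj1_sig f).
case: g f => [g [gi [go gl]]] [f [fi [fo fl]]] /=; split.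
  by apply: inj_comp.
split; first by move=> o args /=; rewrite fo go.
by move=> x y; split=> [/(fl x y)/(gl _ _)|/(gl _ _)/(fl x y)].
Defined.

Definition OVfin : Category.
Proof.
refine (@Cat OVobj OVhom OVid OVcomp _ _ _);
  by move=> *; apply: sig_fun_eq.
Defined.

End UA.

Local Open Scope order_scope.

Definition ba_atom (d : Order.disp_t) (B : finCTBDistrLatticeType d) (a : B) : bool :=
  (a != \bot) && [forall b : B, (b <= a) ==> ((b == \bot) || (b == a))].

(* ord (reflexive, boolean) is natural: there is an enumeration
   s = [a_{i_1}; ...; a_{i_n}] of the atoms (listing the chosen linear
   order of the atoms in increasing order) such that ord is the reflexive
   antilexicographic order on coefficient vectors, the coefficient of
   x at the atom a being 1 iff a <= x. *)
Definition natural_order (d : Order.disp_t) (B : finCTBDistrLatticeType d)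
    (ord : rel B) : Prop :=
  exists s : seq B,
    uniq s /\ (forall a, a \in s = ba_atom a) /\
    forall x y, ord x y <->
      (x = y \/
       exists k, (k < size s)%N /\ ~~ (nth \bot s k <= x) /\ (nth \bot s k <= y) /\
         forall t, (k < t < size s)%N -> (nth \bot s t <= x) = (nth \bot s t <= y)).

Record OFBAobj := OFBAObj {
  ba_disp : Order.disp_t;
  ba_car : finCTBDistrLatticeType ba_disp;
  ba_nontrivial : (\bot : ba_car) != \top;
  ba_ord : rel ba_car;
  ba_natural : natural_order ba_ord }.

Definition ofba_embedding (X Y : OFBAobj) (f : ba_car X -> ba_car Y) : Prop :=
  injective f /\
  (forall x y, f (x `&` y) = f x `&` f y) /\
  (forall x y, f (x `|` y) = f x `|` f y) /\
  (forall x, f (~` x) = ~` f x) /\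
  f \bot = \bot /\ f \top = \top /\
  (forall x y, @ba_ord X x y = @ba_ord Y (f x) (f y)).

Definition OFBAhom (X Y : OFBAobj) := {f : ba_car X -> ba_car Y | ofba_embedding f}.

Definition OFBAid (X : OFBAobj) : OFBAhom X X.
Proof. by exists id; do !split. Defined.

Definition OFBAcomp (X Y Z : OFBAobj) (g : OFBAhom Y Z) (f : OFBAhom X Y) :
  OFBAhom X Z.
Proof.
exists (proj1_sig g \o proj1_sig f).
case: g f => [g [gi [gm [gj [gc [gb [gt go]]]]]]] [f [fi [fm [fj [fc [fb [ft fo]]]]]]] /=.
split; first by apply: inj_comp.
split; first by move=> x y /=; rewrite fm gm.
split; first by move=> x y /=; rewrite fj gj.
split; first by move=> x /=; rewrite fc gc.
split; first by rewrite /= fb gb.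
split; first by rewrite /= ft gt.
by move=> x y /=; rewrite fo go.
Defined.

Definition OFBA : Category.
Proof.
refine (@Cat OFBAobj OFBAhom OFBAid OFBAcomp _ _ _);
  by move=> *; apply: sig_fun_eq.
Defined.

(* Main.v *)
Require Import Defs.
From mathcomp Require Import all_boot all_order all_fingroup.
From Stdlib Require Import FunctionalExtensionality ProofIrrelevance ClassicalEpsilon.
Set Implicit Arguments. Unset Strict Implicit. Unset Printing Implicit Defensive.
Import Order.Theory.
Import Order.DefaultSetSubsetOrder.
Local Open Scope order_scope.

Section BA.
Variables (d : Order.disp_t) (B : finCTBDistrLatticeType d).
Implicit Types (x y a : B).

Lemma atom_neq0 a : ba_atom a -> a != \bot.
Proof. by case/andP. Qed.

Lemma atom_le a b : ba_atom a -> b <= a -> (b == \bot) || (b == a).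
Proof. by case/andP=> _ /forallP /(_ b) /implyP. Qed.

Lemma atom_meet a x : ba_atom a -> (a `&` x == \bot) || (a `&` x == a).
Proof. move=> ha; apply: atom_le ha _; exact: leIl. Qed.

Lemma atom_leC a x : ba_atom a -> (a <= ~` x) = ~~ (a <= x).
Proof.
move=> ha; have a0 := atom_neq0 ha.
case/orP: (atom_meet x ha) => /eqP E.
- have ->: a <= x = false.
    apply/negbTE/negP => ax; move: E; rewrite (meet_l ax) => E; by rewrite E eqxx in a0.
  apply/meet_idPl; rewrite -[in RHS](meetx1 a) -(joinxC x) meetUr E.
  by rewrite joinC joinx0.
- have ax : a <= x by rewrite -E leIr.
  rewrite ax /=; apply/negP => ac.
  have : a <= x `&` ~` x by rewrite lexI ax ac.
  by rewrite meetxC lex0 (negbTE a0).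
Qed.

Lemma atom_leU a x y : ba_atom a -> (a <= x `|` y) = (a <= x) || (a <= y).
Proof.
move=> ha; apply/idP/idP; last by case/orP=> h; [apply: lexUl|apply: lexUr].
move=> h; apply/negPn/negP => /norP [nx ny].
have : a <= ~` x `&` ~` y by rewrite lexI !atom_leC // nx ny.
have : a <= x `|` y := h.
move=> h1 h2.
have : a <= (x `|` y) `&` (~` x `&` ~` y) by rewrite lexI h1 h2.
rewrite meetUl meetA meetxC meet0x (meetC (~` x)) meetA meetxC meet0x joinx0 lex0.
by rewrite (negbTE (atom_neq0 ha)).
Qed.

Lemma atom_le_join_seq a (I : Type) (r : seq I) (P : pred I) (F : I -> B) :
  ba_atom a -> (a <= \join_(i <- r | P i) F i) = has (fun i => P i && (a <= F i)) r.
Proof.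
move=> ha; elim: r => [|i r IH]; first by rewrite big_nil lex0 (negbTE (atom_neq0 ha)).
rewrite big_cons /=; case: (P i) => /=; last exact: IH.
by rewrite atom_leU // IH.
Qed.

Lemma atom_le_join a (I : finType) (P : pred I) (F : I -> B) :
  ba_atom a -> (a <= \join_(i | P i) F i) = [exists i, P i && (a <= F i)].
Proof.
move=> ha; rewrite atom_le_join_seq //; apply/hasP/existsP => [[i _ h]|[i h]].
  by exists i.
by exists i; first exact: mem_index_enum.
Qed.

Lemma le_meet_all a (I : finType) (P : pred I) (F : I -> B) :
  (a <= \meet_(i | P i) F i) = [forall i, P i ==> (a <= F i)].
Proof.
apply/meetsP/forallP => [h i|h i Pi]; first by apply/implyP; exact: h.
by move/implyP: (h i); apply.
Qed.

Lemma exists_atom x : x != \bot -> exists a, ba_atom a && (a <= x).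
Proof.
move: {2}#|[pred y : B | y <= x]| (leqnn #|[pred y : B | y <= x]|) => k.
elim: k x => [|k IH] x.
  move=> hk; have: (0 < #|[pred y : B | (y <= x)%O]|)%N by apply/card_gt0P; exists x; rewrite inE lexx.
  by rewrite lt0n -leqn0 hk.
move=> hk x0.
case ha: (ba_atom x); first by exists x; rewrite ha lexx.
move: ha; rewrite /ba_atom x0 /= => /negbT; rewrite negb_forall => /existsP [b].
rewrite negb_imply negb_or => /and3P [bx b0 bnx].
have [a /andP [ha ab]] : exists a, ba_atom a && (a <= b).
  apply: IH b0; rewrite -ltnS; apply: leq_trans hk.
  apply: proper_card; apply/properP; split.
    by apply/subsetP => y; rewrite !inE => yb; apply: le_trans yb bx.
  by exists x; rewrite !inE ?lexx //; apply/negP => xb; move: bnx; rewrite eq_le xb bx.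
by exists a; apply/andP; split; [exact: ha | exact: le_trans ab bx].
Qed.

Lemma atom_ext x y : (forall a, ba_atom a -> (a <= x) = (a <= y)) -> x = y.
Proof.
have H : forall x y, (forall a, ba_atom a -> (a <= x) = (a <= y)) -> x <= y.
  move=> {}x {}y h; apply/negPn/negP => nxy.
  have : x `&` ~` y != \bot.
    apply/negP => /eqP E; move: nxy; apply/negP/negPn.
    have : x = x `&` (y `|` ~` y) by rewrite joinxC meetx1.
    rewrite meetUr E joinx0 => ->; exact: leIr.
  case/exists_atom => a /andP [ha].
  by rewrite lexI atom_leC // -h // => /andP [-> ].
move=> h; apply/le_anti; rewrite !H // => a ha; by rewrite h.
Qed.

End BA.

Section UAlem.
Variables (Op : Type) (ar : Op -> nat).

Lemma hom_term (X Y : Type) (oX : ops_on ar X) (oY : ops_on ar Y) (f : X -> Y) :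
  preserves_ops oX oY f -> forall n (t : term ar n) x,
  f (term_eval oX t x) = term_eval oY t (fun i => f (x i)).
Proof.
move=> hf n; elim=> [i|o ts IH] x //=.
rewrite hf; congr (oY o _); apply: functional_extensionality => j; exact: IH.
Qed.

Lemma pow_term (A : Type) (oA : ops_on ar A) n k (t : term ar k) (xs : 'I_k -> {ffun 'I_n -> A}) :
  term_eval (@pow_ops _ _ _ oA n) t xs = [ffun i => term_eval oA t (fun j => xs j i)].
Proof.
elim: t xs => [i|o ts IH] xs /=; first by apply/ffunP => i'; rewrite ffunE.
rewrite /pow_ops; apply/ffunP => i; rewrite !ffunE; congr (oA o _).
apply: functional_extensionality => j; by rewrite IH ffunE.
Qed.

Lemma pres_comp (X Y Z : Type) (oX : ops_on ar X) (oY : ops_on ar Y) (oZ : ops_on ar Z)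
  (f : X -> Y) (g : Y -> Z) :
  preserves_ops oX oY f -> preserves_ops oY oZ g -> preserves_ops oX oZ (g \o f).
Proof. by move=> hf hg o args /=; rewrite hf hg. Qed.

Lemma pres_inv (X Y : Type) (oX : ops_on ar X) (oY : ops_on ar Y) (f : X -> Y) (g : Y -> X) :
  preserves_ops oX oY f -> cancel f g -> cancel g f -> preserves_ops oY oX g.
Proof.
move=> hf fK gK o args.
have -> : args = (fun j => f (g (args j))) by apply: functional_extensionality => j; rewrite gK.
by rewrite -hf fK; congr (oX o _); apply: functional_extensionality => j; rewrite gK.
Qed.

Lemma pres_id (X : Type) (oX : ops_on ar X) : preserves_ops oX oX id.
Proof. by []. Qed.

End UAlem.

Section SetBA.
Variable n : nat.
Implicit Types (S T : {set 'I_n}).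

Lemma leSet S T : (S <= T)%O = (S \subset T).
Proof. by []. Qed.
Lemma botSet : (\bot : {set 'I_n})%O = set0.
Proof. by []. Qed.
Lemma topSet : (\top : {set 'I_n})%O = setT.
Proof. by []. Qed.
Lemma meetSet S T : (S `&` T)%O = S :&: T.
Proof. by []. Qed.
Lemma joinSet S T : (S `|` T)%O = S :|: T.
Proof. by []. Qed.
Lemma complSet S : (~` S)%O = ~: S.
Proof. by []. Qed.

Lemma atomSet S : ba_atom S = [exists j, S == [set j]].
Proof.
rewrite /ba_atom botSet; apply/idP/existsP => [/andP [/set0Pn [j jS] /forallP h] | [j /eqP ->]].
  exists j; move/implyP: (h [set j]); rewrite leSet sub1set => /(_ jS) /orP [|//].
  by move/eqP/setP/(_ j); rewrite !inE eqxx.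
  by rewrite eq_sym.
apply/andP; split; first by apply/set0Pn; exists j; rewrite inE.
apply/forallP => b; apply/implyP; rewrite leSet subset1 orbC //.
Qed.

Lemma nth_s (pi : 'S_n) k (hk : (k < n)%N) :
  nth set0 [seq [set pi i] | i <- enum 'I_n] k = [set pi (Ordinal hk)].
Proof.
rewrite (nth_map (Ordinal hk)) ?size_enum_ord //; congr [set pi _]; apply: val_inj.
by rewrite /= nth_enum_ord.
Qed.

End SetBA.

Section Main.
Variables (Op : Type) (ar : Op -> nat) (A : finType) (opsA : ops_on ar A) (ltA : rel A).
Hypothesis Hprim : primal opsA.
Hypothesis Hlin : strict_linear ltA.
Variables (z0 z1 : A).
Hypothesis Hz : ltA z0 z1.

Local Notation V n := {ffun 'I_n -> A}.
Local Notation pw n := (@pow_ops _ ar _ opsA n).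

Lemma pw_comm n m (g : V n -> V m) : preserves_ops (pw n) (pw m) g ->
  forall k (F : ('I_k -> A) -> A) (xs : 'I_k -> V n), (0 < k)%N ->
  g [ffun i => F (fun j => xs j i)] = [ffun i => F (fun j => g (xs j) i)].
Proof.
move=> hg k F xs k0; have [t Ht] := (proj2 Hprim) k F k0.
have E : forall p (ys : 'I_k -> V p), [ffun i => F (fun j => ys j i)] = term_eval (pw p) t ys.
  by move=> p ys; rewrite pow_term; apply/ffunP => i; rewrite !ffunE Ht.
by rewrite !E (hom_term hg).
Qed.

Lemma ltAxx a : ltA a a = false.
Proof. by case: Hlin => irr _; apply: irr. Qed.

Lemma ltA_asym a b : ltA a b -> ltA b a = false.
Proof.
case: Hlin => irr [tr _] ab; apply/negP => ba.
by have := tr _ _ _ ab ba; rewrite ltAxx.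
Qed.

Lemma z01 : z0 != z1.
Proof. by apply/negP => /eqP E; move: Hz; rewrite E ltAxx. Qed.

Definition alb n (pi : 'S_n) (x y : V n) : bool :=
  (x == y) || [exists s : 'I_n, ltA (x (pi s)) (y (pi s)) &&
        [forall t : 'I_n, (s < t)%N ==> (x (pi t) == y (pi t))]].

Lemma albP n (pi : 'S_n) x y : reflect (antilex_le ltA pi x y) (alb pi x y).
Proof.
apply: (iffP orP) => [[/eqP -> | /existsP [s /andP [h1 /forallP h2]]] | [-> | [s [h1 h2]]]].
- by left.
- right; exists s; split=> // t st; by move/implyP: (h2 t) => /(_ st) /eqP.
- by left.
- right; apply/existsP; exists s; rewrite h1 /=; apply/forallP => t; apply/implyP => st.
  by rewrite h2.
Qed.

Lemma al_transfer n (pi : 'S_n) (x y x' y' : V n) :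
  (forall i, ltA (x' i) (y' i) = ltA (x i) (y i)) ->
  (forall i, (x' i == y' i) = (x i == y i)) -> alb pi x' y' = alb pi x y.
Proof.
move=> H1 H2; rewrite /alb; congr orb.
  apply/eqP/eqP => E; apply/ffunP => i; apply/eqP; [rewrite -H2 | rewrite H2]; by rewrite E.
apply: eq_existsb => s; rewrite H1; congr andb; apply: eq_forallb => t; by rewrite H2.
Qed.

Definition ind n (S : {set 'I_n}) : V n := [ffun i => if i \in S then z1 else z0].

Lemma indE n (S : {set 'I_n}) i : (ind S i == z1) = (i \in S).
Proof. by rewrite ffunE; case: (i \in S); rewrite ?eqxx // (negbTE z01). Qed.

Lemma ind_inj n : injective (@ind n).
Proof. move=> S T E; apply/setP => i; by rewrite -!indE E. Qed.

Definition u01 (a : A) := if a == z1 then z1 else z0.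

Lemma ind_u01 n (S : {set 'I_n}) : [ffun i => u01 (ind S i)] = ind S.
Proof. apply/ffunP => i; rewrite !ffunE /u01; case: (i \in S); rewrite ?eqxx //. by rewrite (negbTE z01). Qed.

Lemma u01_ind n (x : V n) : [ffun i => u01 (x i)] = ind [set i | x i == z1].
Proof. by apply/ffunP => i; rewrite !ffunE inE /u01. Qed.

Lemma hom_ind n m (g : V n -> V m) : preserves_ops (pw n) (pw m) g ->
  forall S, g (ind S) = ind [set j | g (ind S) j == z1].
Proof.
move=> hg S; rewrite -u01_ind -{1}ind_u01.
exact: (pw_comm hg (fun v : 'I_1 -> A => u01 (v ord0)) (fun _ => ind S)).
Qed.

Lemma ltA_ind n (S T : {set 'I_n}) i : ltA (ind S i) (ind T i) = (i \notin S) && (i \in T).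
Proof.
rewrite !ffunE; case: (i \in S); case: (i \in T) => //=; rewrite ?ltAxx //.
exact: ltA_asym.
Qed.

Lemma eq_ind n (S T : {set 'I_n}) i : (ind S i == ind T i) = ((i \in S) == (i \in T)).
Proof.
rewrite !ffunE; case: (i \in S); case: (i \in T) => //=; rewrite ?eqxx //.
  by rewrite eq_sym (negbTE z01).
by rewrite (negbTE z01).
Qed.


Lemma Fnat n (pi : 'S_n) : (0 < n)%N ->
  natural_order (B := {set 'I_n}) (fun S T => alb pi (ind S) (ind T)).
Proof.
move=> n0; exists [seq [set pi i] | i <- enum 'I_n]; split.
  rewrite map_inj_uniq ?enum_uniq // => i j /set1_inj; exact: perm_inj.
split.
  move=> a; rewrite atomSet; apply/mapP/existsP => [[i _ ->]|[j /eqP ->]].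
    by exists (pi i).
  by exists ((pi^-1)%g j); rewrite ?mem_enum // permKV.
move=> S T; rewrite size_map size_enum_ord; split.
- case/orP => [/eqP /ind_inj -> | /existsP [s /andP [h1 /forallP h2]]]; first by left.
  right; exists s; rewrite ltn_ord nth_s.
  have -> : Ordinal (ltn_ord s) = s by apply: val_inj.
  move: h1; rewrite ltA_ind => /andP [h1 h1']; rewrite !leSet !sub1set h1 h1'; split=> //; split=> //.
  split=> // t /andP [st tn]; rewrite !nth_s !leSet !sub1set.
  have := h2 (Ordinal tn); rewrite st /= eq_ind => /eqP; done.
- case => [-> | [k [kn [h1 [h2 h3]]]]]; first by rewrite /alb eqxx.
  apply/orP; right; apply/existsP; exists (Ordinal kn).
  move: h1 h2; rewrite !nth_s !leSet !sub1set => h1 h2.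
  rewrite ltA_ind h1 h2 /=; apply/forallP => t; apply/implyP => kt.
  have := h3 t; rewrite kt ltn_ord !nth_s !leSet !sub1set eq_ind => /(_ isT).
  have -> : Ordinal (ltn_ord t) = t by apply: val_inj.
  by move=> ->.
Qed.

Local Notation OV := (OVobj opsA ltA).

Lemma ov_sig (X : OV) : {n : nat & {p : 'S_n & {phi : ov_car X -> V n & {psi : V n -> ov_car X |
  (0 < n)%N /\ cancel phi psi /\ cancel psi phi /\ preserves_ops (@ov_ops _ _ _ _ _ X) (pw n) phi /\
  (forall x y, ov_le x y <-> alb p (phi x) (phi y))}}}}.
Proof.
have [n Hn] := constructive_indefinite_description _ (ov_iso X).
exists n.
have [pi Hpi] := constructive_indefinite_description _ Hn. exists pi.
have [phi Hphi] := constructive_indefinite_description _ Hpi. exists phi.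
case: Hphi => n0 [bij [hp hle]].
have [psi [c1 c2]] : {psi | cancel phi psi /\ cancel psi phi}.
  apply: constructive_indefinite_description; case: bij => g c1 c2; by exists g.
exists psi; do !split => //.
- by move/hle/albP.
- by move=> h; apply/hle/albP.
Qed.

Definition oN (X : OV) : nat := projT1 (ov_sig X).
Definition oPi (X : OV) : 'S_(oN X) := projT1 (projT2 (ov_sig X)).
Definition oPhi (X : OV) : ov_car X -> V (oN X) := projT1 (projT2 (projT2 (ov_sig X))).
Definition oPsi (X : OV) : V (oN X) -> ov_car X := proj1_sig (projT2 (projT2 (projT2 (ov_sig X)))).
Arguments oN : clear implicits.
Arguments oPi : clear implicits.
Arguments oPhi : clear implicits.
Arguments oPsi : clear implicits.
Lemma oP (X : OV) : (0 < oN X)%N /\ cancel (oPhi X) (oPsi X) /\ cancel (oPsi X) (oPhi X) /\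
  preserves_ops (@ov_ops _ _ _ _ _ X) (pw (oN X)) (oPhi X) /\
  (forall x y, ov_le x y <-> alb (oPi X) (oPhi X x) (oPhi X y)).
Proof. exact: (proj2_sig (projT2 (projT2 (projT2 (ov_sig X))))). Qed.

Lemma oN0 X : (0 < oN X)%N. Proof. by case: (oP X). Qed.
Lemma oPhiK X : cancel (oPhi X) (oPsi X). Proof. by case: (oP X) => _ []. Qed.
Lemma oPsiK X : cancel (oPsi X) (oPhi X). Proof. by case: (oP X) => _ [_ []]. Qed.
Lemma oPhi_pres X : preserves_ops (@ov_ops _ _ _ _ _ X) (pw (oN X)) (oPhi X).
Proof. by case: (oP X) => _ [_ [_ []]]. Qed.
Lemma oPsi_pres X : preserves_ops (pw (oN X)) (@ov_ops _ _ _ _ _ X) (oPsi X).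
Proof. exact: pres_inv (oPhi_pres (X:=X)) (oPhiK (X:=X)) (oPsiK (X:=X)). Qed.
Lemma oLe X x y : ov_le x y <-> alb (oPi X) (oPhi X x) (oPhi X y).
Proof. by case: (oP X) => _ [_ [_ [_ ]]]; apply. Qed.

Lemma set0T n : (0 < n)%N -> (\bot : {set 'I_n})%O != \top.
Proof.
move=> n0; rewrite botSet topSet; apply/negP => /eqP /setP /(_ (Ordinal n0)).
by rewrite !inE.
Qed.

Definition FB (X : OV) : OFBAobj :=
  @OFBAObj _ {set 'I_(oN X)} (set0T (oN0 X)) (fun S T => alb (oPi X) (ind S) (ind T))
    (Fnat (oPi X) (oN0 X)).

Definition cg (X Y : OV) (f : ov_car X -> ov_car Y) : V (oN X) -> V (oN Y) :=
  oPhi Y \o f \o oPsi X.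

Arguments cg : clear implicits.
Lemma cg_pres (X Y : OV) (f : OVhom X Y) : preserves_ops (pw (oN X)) (pw (oN Y)) (cg X Y (proj1_sig f)).
Proof.
apply: pres_comp; first exact: oPsi_pres.
apply: pres_comp; last exact: oPhi_pres.
by case: (proj2_sig f) => _ [].
Qed.

Definition Fmap0 (X Y : OV) (f : ov_car X -> ov_car Y) (S : {set 'I_(oN X)}) : {set 'I_(oN Y)} :=
  [set j | cg X Y f (ind S) j == z1].

Arguments Fmap0 : clear implicits.
Lemma ind_Fmap (X Y : OV) (f : OVhom X Y) S : ind (Fmap0 X Y (proj1_sig f) S) = cg X Y (proj1_sig f) (ind S).
Proof. by rewrite /Fmap0 -hom_ind //; exact: cg_pres. Qed.

Lemma pw_un n m (g : V n -> V m) : preserves_ops (pw n) (pw m) g ->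
  forall (h : A -> A) (x : V n), g [ffun i => h (x i)] = [ffun i => h (g x i)].
Proof. move=> hg h x; exact: (pw_comm hg (fun v : 'I_1 -> A => h (v ord0)) (fun _ => x)). Qed.

Definition xs2 (T : Type) (x y : T) : 'I_2 -> T := fun j => if val j == 0%N then x else y.

Lemma pw_bin n m (g : V n -> V m) : preserves_ops (pw n) (pw m) g ->
  forall (h : A -> A -> A) (x y : V n), g [ffun i => h (x i) (y i)] = [ffun i => h (g x i) (g y i)].
Proof.
move=> hg h x y.
exact: (pw_comm hg (fun v : 'I_2 -> A => h (v ord0) (v ord_max)) (xs2 x y)).
Qed.

Definition andA (a b : A) := if (a == z1) && (b == z1) then z1 else z0.
Definition orA (a b : A) := if (a == z1) || (b == z1) then z1 else z0.
Definition notA (a : A) := if a == z1 then z0 else z1.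

Lemma ind_and n (S T : {set 'I_n}) : ind (S :&: T) = [ffun i => andA (ind S i) (ind T i)].
Proof. apply/ffunP => i; rewrite !ffunE inE /andA; by case: (i \in S); case: (i \in T); rewrite /= ?eqxx ?(negbTE z01). Qed.
Lemma ind_or n (S T : {set 'I_n}) : ind (S :|: T) = [ffun i => orA (ind S i) (ind T i)].
Proof. apply/ffunP => i; rewrite !ffunE inE /orA; by case: (i \in S); case: (i \in T); rewrite /= ?eqxx ?(negbTE z01). Qed.
Lemma ind_not n (S : {set 'I_n}) : ind (~: S) = [ffun i => notA (ind S i)].
Proof. apply/ffunP => i; rewrite !ffunE inE /notA; by case: (i \in S); rewrite /= ?eqxx ?(negbTE z01). Qed.
Lemma ind_set0 n : ind (set0 : {set 'I_n}) = [ffun=> z0].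
Proof. by apply/ffunP => i; rewrite !ffunE inE. Qed.
Lemma ind_setT n : ind (setT : {set 'I_n}) = [ffun=> z1].
Proof. by apply/ffunP => i; rewrite !ffunE inE. Qed.
Lemma pw_const n m (g : V n -> V m) : preserves_ops (pw n) (pw m) g ->
  forall a, g [ffun=> a] = [ffun=> a].
Proof. move=> hg a; exact: (pw_un hg (fun _ => a) [ffun=> a]). Qed.

Lemma hom_inj (X Y : OV) (f : OVhom X Y) : injective (proj1_sig f).
Proof. by case: (proj2_sig f). Qed.
Lemma hom_pres (X Y : OV) (f : OVhom X Y) :
  preserves_ops (@ov_ops _ _ _ _ _ X) (@ov_ops _ _ _ _ _ Y) (proj1_sig f).
Proof. by case: (proj2_sig f) => _ []. Qed.
Lemma hom_le (X Y : OV) (f : OVhom X Y) x y : ov_le x y <-> ov_le (proj1_sig f x) (proj1_sig f y).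
Proof. by case: (proj2_sig f) => _ [_]; apply. Qed.

Arguments hom_inj {X Y} f.
Arguments hom_pres {X Y} f.
Arguments hom_le {X Y} f x y.
Lemma cg_inj (X Y : OV) (f : OVhom X Y) : injective (cg X Y (proj1_sig f)).
Proof.
move=> a b; rewrite /cg /= => /(can_inj (oPhiK (X:=Y))) /(hom_inj f).
by apply: (can_inj (oPsiK (X:=X))).
Qed.

Lemma cg_le (X Y : OV) (f : OVhom X Y) x y :
  alb (oPi Y) (cg X Y (proj1_sig f) x) (cg X Y (proj1_sig f) y) = alb (oPi X) x y.
Proof.
rewrite /cg /=; apply/idP/idP.
  move/oLe/(hom_le f)/oLe; by rewrite !oPsiK.
by rewrite -{1}(oPsiK x) -{1}(oPsiK y) => /oLe/(hom_le f)/oLe.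
Qed.

Lemma Fmap_emb (X Y : OV) (f : OVhom X Y) :
  ofba_embedding (X := FB X) (Y := FB Y) (Fmap0 X Y (proj1_sig f)).
Proof.
have hg := cg_pres f.
have E : forall S T, (Fmap0 X Y (proj1_sig f) S = Fmap0 X Y (proj1_sig f) T) <->
   (cg X Y (proj1_sig f) (ind S) = cg X Y (proj1_sig f) (ind T)).
  by move=> S T; rewrite -!ind_Fmap; split => [->//|/ind_inj].
split.
  by move=> S T /E /cg_inj /ind_inj.
split.
  move=> S T; apply: ind_inj; rewrite /= !meetSet ind_Fmap ind_and (pw_bin hg) ind_and.
  by rewrite -!ind_Fmap.
split.
  move=> S T; apply: ind_inj; rewrite /= !joinSet ind_Fmap ind_or (pw_bin hg) ind_or.
  by rewrite -!ind_Fmap.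
split.
  move=> S; apply: ind_inj; rewrite /= !complSet ind_Fmap ind_not (pw_un hg) ind_not.
  by rewrite -!ind_Fmap.
split.
  by apply: ind_inj; rewrite /= !botSet ind_Fmap ind_set0 (pw_const hg) ind_set0.
split.
  by apply: ind_inj; rewrite /= !topSet ind_Fmap ind_setT (pw_const hg) ind_setT.
by move=> S T /=; rewrite !ind_Fmap cg_le.
Qed.

Definition Fmap (X Y : OV) (f : OVhom X Y) : OFBAhom (FB X) (FB Y) :=
  exist _ (Fmap0 X Y (proj1_sig f)) (Fmap_emb f).

Lemma Fid (X : OV) : Fmap (OVid X) = OFBAid (FB X).
Proof.
apply: sig_fun_eq => S /=; apply: ind_inj.
by rewrite (ind_Fmap (OVid X)) /cg /= oPsiK.
Qed.

Lemma Fcomp (X Y Z : OV) (g : OVhom Y Z) (f : OVhom X Y) :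
  Fmap (OVcomp g f) = OFBAcomp (Fmap g) (Fmap f).
Proof.
apply: sig_fun_eq => S /=; apply: ind_inj.
rewrite (ind_Fmap (OVcomp g f)) (ind_Fmap g) (ind_Fmap f) /cg /=.
by rewrite oPhiK.
Qed.

Definition FunF : Functor (OVfin opsA ltA) OFBA :=
  @Fun (OVfin opsA ltA) OFBA FB Fmap Fid Fcomp.

Section Gdef.
Variable (d : Order.disp_t) (B : finCTBDistrLatticeType d).

Definition partb (p : {ffun A -> B}) : bool :=
  [forall a, forall b, (a != b) ==> (p a `&` p b == \bot)] && (\join_a p a == \top).

Definition pv (p : {ffun A -> B}) (al : B) : A := odflt z0 [pick a | al <= p a].

Lemma pvP p al a : partb p -> ba_atom al -> (al <= p a) = (pv p al == a).
Proof.
case/andP => /forallP disj /eqP top ha.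
have ex : exists a, al <= p a.
  have : al <= \join_a p a by rewrite top lex1.
  by rewrite atom_le_join // => /existsP [b /= hb]; exists b.
have uq : forall a b, al <= p a -> al <= p b -> a = b.
  move=> a1 b1 h1 h2; apply/eqP/negPn/negP => ne.
  move/forallP: (disj a1) => /(_ b1) /implyP /(_ ne) /eqP E.
  have : al <= p a1 `&` p b1 by rewrite lexI h1 h2.
  by rewrite E lex0 (negbTE (atom_neq0 ha)).
rewrite /pv; case: pickP => [b hb|none] /=; last by case: ex => b hb; move: (none b); rewrite hb.
apply/idP/eqP => [h|<-//]; exact: uq _ _ hb h.
Qed.

Lemma pv_le p al : partb p -> ba_atom al -> al <= p (pv p al).
Proof. by move=> hp ha; rewrite (pvP _ hp ha). Qed.

Lemma partb_atoms (p : {ffun A -> B}) :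
  (forall al, ba_atom al -> exists a, al <= p a) ->
  (forall al a b, ba_atom al -> al <= p a -> al <= p b -> a = b) -> partb p.
Proof.
move=> ex uq; apply/andP; split.
  apply/forallP => a; apply/forallP => b; apply/implyP => ne; apply/eqP.
  apply: atom_ext => al ha; rewrite lex0 (negbTE (atom_neq0 ha)) lexI.
  apply/negP => /andP [h1 h2]; by move: ne; rewrite (uq _ _ _ ha h1 h2) eqxx.
apply/eqP; apply: atom_ext => al ha; rewrite lex1 atom_le_join //.
by case: (ex _ ha) => a h; apply/existsP; exists a.
Qed.

Definition opsF (o : Op) (ps : 'I_(ar o) -> {ffun A -> B}) : {ffun A -> B} :=
  [ffun a => \join_(b : {ffun 'I_(ar o) -> A} | @opsA o b == a) \meet_(j : 'I_(ar o)) ps j (b j)].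

Lemma opsF_atom o (ps : 'I_(ar o) -> {ffun A -> B}) al a :
  (forall j, partb (ps j)) -> ba_atom al ->
  (al <= opsF ps a) = (@opsA o (fun j => pv (ps j) al) == a).
Proof.
move=> hp ha; rewrite ffunE atom_le_join //; apply/existsP/idP => [[b /andP [/eqP <- ]]|h].
  rewrite le_meet_all => /forallP hb.
  have -> : (fun j => pv (ps j) al) = b.
    apply: functional_extensionality => j; apply/eqP; rewrite -pvP //.
    by move/implyP: (hb j); apply.
  by [].
exists [ffun j => pv (ps j) al]; apply/andP; split.
  suff -> : @opsA o [ffun j => pv (ps j) al] = @opsA o (fun j => pv (ps j) al) by [].
  by congr (@opsA o); apply: functional_extensionality => j; rewrite ffunE.
rewrite le_meet_all; apply/forallP => j; apply/implyP => _; rewrite ffunE.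
exact: pv_le.
Qed.

End Gdef.

Section Gdef2.
Variable (d : Order.disp_t) (B : finCTBDistrLatticeType d).

Definition Gcar := {p : {ffun A -> B} | partb p}.

Lemma opsF_part o (ps : 'I_(ar o) -> {ffun A -> B}) : (forall j, partb (ps j)) -> partb (opsF ps).
Proof.
move=> hp; apply: partb_atoms => [al ha | al a b ha].
  by exists (@opsA o (fun j => pv (ps j) al)); rewrite opsF_atom.
by rewrite !opsF_atom // => /eqP <- /eqP <-.
Qed.

Definition Gops : ops_on ar Gcar :=
  fun o ps => exist _ (opsF (fun j => val (ps j))) (opsF_part (fun j => valP (ps j))).

Definition Dm (p q : {ffun A -> B}) : B :=
  \join_(ab : A * A | ab.1 != ab.2) (p ab.1 `&` q ab.2).
Definition Lm (p q : {ffun A -> B}) : B :=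
  \join_(ab : A * A | ltA ab.1 ab.2) (p ab.1 `&` q ab.2).

Lemma Dm_atom p q al : partb p -> partb q -> ba_atom al ->
  (al <= Dm p q) = (pv p al != pv q al).
Proof.
move=> hp hq ha; rewrite atom_le_join //; apply/existsP/idP => [[[a b] /andP [/= ne]]|ne].
  by rewrite lexI !pvP // => /andP [/eqP -> /eqP ->].
by exists (pv p al, pv q al); rewrite /= ne lexI !pv_le.
Qed.

Lemma Lm_atom p q al : partb p -> partb q -> ba_atom al ->
  (al <= Lm p q) = ltA (pv p al) (pv q al).
Proof.
move=> hp hq ha; rewrite atom_le_join //; apply/existsP/idP => [[[a b] /andP [/= ne]]|ne].
  by rewrite lexI !pvP // => /andP [/eqP -> /eqP ->].
by exists (pv p al, pv q al); rewrite /= ne lexI !pv_le.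
Qed.

Definition Gle (ord : rel B) (p q : Gcar) : Prop :=
  ord (Dm (val p) (val q) `&` ~` Lm (val p) (val q)) (Lm (val p) (val q)).

End Gdef2.

Lemma DL_alb n (pi : 'S_n) (x y : V n) (SD SL : {set 'I_n}) :
  (forall i, (i \in SD) = (x i != y i)) -> (forall i, (i \in SL) = ltA (x i) (y i)) ->
  alb pi (ind (SD :&: ~: SL)) (ind SL) = alb pi x y.
Proof.
move=> hD hL; apply: al_transfer => i.
  rewrite ltA_ind !inE hD hL; case: (ltA (x i) (y i)) => //=; by rewrite andbF.
rewrite eq_ind !inE hD hL.
case: (eqVneq (x i) (y i)) => [->|ne] /=; first by rewrite ltAxx eqxx.
case lt: (ltA (x i) (y i)) => /=; first by [].
by [].
Qed.

Section GB.
Variable B : OFBAobj.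
Local Notation BB := (ba_car B).

Definition nsig := constructive_indefinite_description _ (ba_natural B).
Definition sB : seq BB := proj1_sig nsig.
Lemma sP : uniq sB /\ (forall a, a \in sB = ba_atom a) /\
    forall x y, ba_ord x y <->
      (x = y \/
       exists k, (k < size sB)%N /\ ~~ (nth \bot sB k <= x) /\ (nth \bot sB k <= y) /\
         forall t, (k < t < size sB)%N -> (nth \bot sB t <= x) = (nth \bot sB t <= y)).
Proof. exact: (proj2_sig nsig). Qed.

Definition nB := size sB.
Definition at_ (k : 'I_nB) : BB := nth \bot sB k.

Lemma at_atom k : ba_atom (at_ k).
Proof. by case: sP => _ [h _]; rewrite -h mem_nth. Qed.

Lemma atom_at al : ba_atom al -> exists k : 'I_nB, al = at_ k.
Proof.
case: sP => _ [h _]; rewrite -h => ins.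
have kn : (index al sB < nB)%N by rewrite index_mem.
by exists (Ordinal kn); rewrite /at_ /= nth_index.
Qed.

Lemma at_le (k j : 'I_nB) : (at_ k <= at_ j) = (k == j).
Proof.
apply/idP/eqP => [h|->]; last exact: lexx.
case/orP: (atom_le (at_atom j) h) => [/eqP E|/eqP E].
  by move: (atom_neq0 (at_atom k)); rewrite E eqxx.
apply: val_inj; move: E; rewrite /at_; case: sP => uq _ /eqP.
by rewrite nth_uniq // => /eqP.
Qed.

Lemma nB0 : (0 < nB)%N.
Proof.
have : (\top : BB) != \bot by rewrite eq_sym; exact: ba_nontrivial.
case/exists_atom => al /andP [ha _]; case: (atom_at ha) => k _.
exact: leq_ltn_trans (leq0n k) (ltn_ord k).
Qed.

Definition cs (x : BB) : {set 'I_nB} := [set k | at_ k <= x].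
Definition chi (x : BB) : V nB := ind (cs x).

Lemma cs_inj : injective cs.
Proof.
move=> x y E; apply: atom_ext => al /atom_at [k ->].
by move/setP: E => /(_ k); rewrite !inE.
Qed.

Lemma cs_meet x y : cs (x `&` y) = cs x :&: cs y.
Proof. by apply/setP => k; rewrite !inE lexI. Qed.
Lemma cs_join x y : cs (x `|` y) = cs x :|: cs y.
Proof. by apply/setP => k; rewrite !inE atom_leU // at_atom. Qed.
Lemma cs_compl x : cs (~` x) = ~: cs x.
Proof. by apply/setP => k; rewrite !inE atom_leC // at_atom. Qed.
Lemma cs_bot : cs \bot = set0.
Proof. by apply/setP => k; rewrite !inE lex0 (negbTE (atom_neq0 (at_atom k))). Qed.
Lemma cs_top : cs \top = setT.
Proof. by apply/setP => k; rewrite !inE lex1. Qed.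

Lemma ord_chi x y : ba_ord x y = alb 1 (chi x) (chi y).
Proof.
case: sP => _ [_ h]; apply/idP/albP.
- case/h => [->|[k [kn [h1 [h2 h3]]]]]; first by left.
  right; exists (Ordinal kn); rewrite perm1 ltA_ind !inE /at_ /= h1 h2; split=> // t kt.
  rewrite perm1; apply/eqP; rewrite eq_ind !inE /at_ h3 //.
  by rewrite kt ltn_ord.
- move=> H; apply/h; case: H => [/ind_inj/cs_inj ->|[s [h1 h2]]]; first by left.
  right; exists s; rewrite ltn_ord; move: h1; rewrite perm1 ltA_ind !inE => /andP [h1 h1'].
  split=> //; split=> //; split=> // t /andP [st tn].
  have := h2 (Ordinal tn); rewrite perm1 => /(_ st) /eqP; rewrite eq_ind !inE /at_ /=.
  by move/eqP.
Qed.

Definition psi (p : Gcar BB) : V nB := [ffun k => pv (val p) (at_ k)].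

Lemma psiinv_part (x : V nB) : partb [ffun a => \join_(k | x k == a) at_ k].
Proof.
have key : forall j a, (at_ j <= [ffun a => \join_(k | x k == a) at_ k] a) = (x j == a).
  move=> j a; rewrite ffunE atom_le_join ?at_atom //; apply/existsP/idP => [[k /andP [h]]|h].
    by rewrite at_le => /eqP ->.
  by exists j; rewrite h lexx.
apply: partb_atoms => [al /atom_at [k ->]|al a b /atom_at [k ->]].
  by exists (x k); rewrite key.
by rewrite !key => /eqP <- /eqP.
Qed.

Definition psiinv (x : V nB) : Gcar BB := exist (fun p : {ffun A -> BB} => partb p) _ (psiinv_part x).

Lemma psiinv_at (x : V nB) k a : (at_ k <= val (psiinv x) a) = (x k == a).
Proof.
rewrite /= ffunE atom_le_join ?at_atom //; apply/existsP/idP => [[j /andP [h]]|h].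
  by rewrite at_le => /eqP ->.
by exists k; rewrite h lexx.
Qed.

Lemma psiK : cancel psi psiinv.
Proof.
move=> p; apply: val_inj; apply/ffunP => a; apply: atom_ext => al /atom_at [k ->].
by rewrite psiinv_at ffunE pvP // ?at_atom // (valP p).
Qed.

Lemma psiinvK : cancel psiinv psi.
Proof.
move=> x; apply/ffunP => k; rewrite ffunE; apply/eqP; rewrite -pvP ?at_atom ?(valP (psiinv x)) //.
by rewrite psiinv_at.
Qed.

Lemma psi_pres : preserves_ops (Gops (B:=BB)) (pw nB) psi.
Proof.
move=> o ps; apply/ffunP => k; rewrite /pow_ops !ffunE; apply/eqP.
rewrite -pvP ?at_atom ?(valP (Gops ps)) //= opsF_atom ?at_atom //; last by move=> j; exact: valP.
apply/eqP; congr (@opsA o _); apply: functional_extensionality => j; by rewrite ffunE.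
Qed.

Lemma psi_le p q : Gle (ba_ord (o:=B)) p q <-> alb 1 (psi p) (psi q).
Proof.
rewrite /Gle ord_chi /chi cs_meet cs_compl (DL_alb 1 (x:=psi p) (y:=psi q)) //.
- by move=> i; rewrite inE Dm_atom ?at_atom ?(valP p) ?(valP q) // !ffunE.
- by move=> i; rewrite inE Lm_atom ?at_atom ?(valP p) ?(valP q) // !ffunE.
Qed.

Lemma GB_iso : exists (n : nat) (pi : 'S_n) (phi : Gcar BB -> V n),
      (0 < n)%N /\ bijective phi /\ preserves_ops (Gops (B:=BB)) (pw n) phi /\
      (forall x y, Gle (ba_ord (o:=B)) x y <-> antilex_le ltA pi (phi x) (phi y)).
Proof.
exists nB, 1%g, psi; split; first exact: nB0.
split; first exact: Bijective psiK psiinvK.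
split; first exact: psi_pres.
move=> x y; rewrite psi_le; split; [by move/albP | by move/albP].
Qed.

Definition GB : OV := @OVObj _ ar A opsA ltA (Gcar BB) (Gops (B:=BB)) (Gle (ba_ord (o:=B))) GB_iso.

End GB.

Section Ghom.
Variables (B B' : OFBAobj) (h : OFBAhom B B').
Local Notation hh := (proj1_sig h).

Lemma h_inj : injective hh. Proof. by case: (proj2_sig h). Qed.
Lemma h_meet x y : hh (x `&` y) = hh x `&` hh y. Proof. by case: (proj2_sig h) => _ []. Qed.
Lemma h_join x y : hh (x `|` y) = hh x `|` hh y. Proof. by case: (proj2_sig h) => _ [_ []]. Qed.
Lemma h_compl x : hh (~` x) = ~` hh x. Proof. by case: (proj2_sig h) => _ [_ [_ []]]. Qed.
Lemma h_bot : hh \bot = \bot. Proof. by case: (proj2_sig h) => _ [_ [_ [_ []]]]. Qed.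
Lemma h_top : hh \top = \top. Proof. by case: (proj2_sig h) => _ [_ [_ [_ [_ []]]]]. Qed.
Lemma h_ord x y : ba_ord x y = ba_ord (hh x) (hh y).
Proof. by case: (proj2_sig h) => _ [_ [_ [_ [_ [_ ]]]]]. Qed.

Lemma h_bigjoin (I : Type) (r : seq I) (P : pred I) (F : I -> ba_car B) :
  hh (\join_(i <- r | P i) F i) = \join_(i <- r | P i) hh (F i).
Proof. exact: (big_morph hh h_join h_bot). Qed.
Lemma h_bigmeet (I : Type) (r : seq I) (P : pred I) (F : I -> ba_car B) :
  hh (\meet_(i <- r | P i) F i) = \meet_(i <- r | P i) hh (F i).
Proof. exact: (big_morph hh h_meet h_top). Qed.

Lemma Gmap_part (p : Gcar (ba_car B)) : partb [ffun a => hh (val p a)].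
Proof.
case/andP: (valP p) => /forallP disj /eqP top; apply/andP; split.
  apply/forallP => a; apply/forallP => b; apply/implyP => ne.
  move/forallP: (disj a) => /(_ b) /implyP /(_ ne) /eqP E.
  by rewrite !ffunE -h_meet E h_bot.
apply/eqP; under eq_bigr do rewrite ffunE.
by rewrite -h_bigjoin top h_top.
Qed.

Definition Gmap0 (p : Gcar (ba_car B)) : Gcar (ba_car B') :=
  exist (fun q : {ffun A -> ba_car B'} => partb q) _ (Gmap_part p).

Lemma Gmap_Dm p q : hh (Dm (val p) (val q)) = Dm (val (Gmap0 p)) (val (Gmap0 q)).
Proof. rewrite /Dm h_bigjoin; apply: eq_bigr => ab _; by rewrite h_meet !ffunE. Qed.
Lemma Gmap_Lm p q : hh (Lm (val p) (val q)) = Lm (val (Gmap0 p)) (val (Gmap0 q)).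
Proof. rewrite /Lm h_bigjoin; apply: eq_bigr => ab _; by rewrite h_meet !ffunE. Qed.

Lemma Gmap_emb : ov_embedding (X := GB B) (Y := GB B') Gmap0.
Proof.
split.
  move=> p q /(congr1 val) /= E; apply: val_inj; apply/ffunP => a.
  by apply: h_inj; move/ffunP: E => /(_ a); rewrite !ffunE.
split.
  move=> o ps; apply: val_inj; apply/ffunP => a; rewrite /= !ffunE h_bigjoin.
  apply: eq_bigr => b _; rewrite h_bigmeet; apply: eq_bigr => j _; by rewrite ffunE.
move=> p q /=; rewrite /Gle h_ord h_meet h_compl Gmap_Dm Gmap_Lm; by [].
Qed.

Definition Gmap : OVhom (GB B) (GB B') := exist _ Gmap0 Gmap_emb.

End Ghom.

Lemma Gid (B : OFBAobj) : Gmap (OFBAid B) = OVid (GB B).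
Proof. by apply: sig_fun_eq => p /=; apply: val_inj; apply/ffunP => a; rewrite ffunE. Qed.

Lemma Gcomp (B1 B2 B3 : OFBAobj) (g : OFBAhom B2 B3) (f : OFBAhom B1 B2) :
  Gmap (OFBAcomp g f) = OVcomp (Gmap g) (Gmap f).
Proof. by apply: sig_fun_eq => p /=; apply: val_inj; apply/ffunP => a; rewrite !ffunE. Qed.

Definition FunG : Functor OFBA (OVfin opsA ltA) :=
  @Fun OFBA (OVfin opsA ltA) GB Gmap Gid Gcomp.

Lemma iso_OV (X Y : OV) (f : OVhom X Y) : bijective (proj1_sig f) -> is_iso (C := OVfin opsA ltA) f.
Proof.
case=> g fK gK.
have emb : ov_embedding (X := Y) (Y := X) g.
  split; first exact: can_inj gK.
  split; first exact: pres_inv (hom_pres f) fK gK.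
  by move=> y1 y2; rewrite (hom_le f (g y1) (g y2)) !gK.
exists (exist _ g emb); split; apply: sig_fun_eq => x /=; [exact: fK | exact: gK].
Qed.

Lemma iso_OFBA (B B' : OFBAobj) (h : OFBAhom B B') : bijective (proj1_sig h) -> is_iso (C := OFBA) h.
Proof.
case=> g fK gK.
have emb : ofba_embedding (X := B') (Y := B) g.
  split; first exact: can_inj gK.
  split; first by move=> x y; apply: (h_inj (h:=h)); rewrite h_meet !gK.
  split; first by move=> x y; apply: (h_inj (h:=h)); rewrite h_join !gK.
  split; first by move=> x; apply: (h_inj (h:=h)); rewrite h_compl !gK.
  split; first by apply: (h_inj (h:=h)); rewrite h_bot !gK.
  split; first by apply: (h_inj (h:=h)); rewrite h_top !gK.
  by move=> x y; rewrite (h_ord h (g x) (g y)) !gK.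
exists (exist _ g emb); split; apply: sig_fun_eq => x /=; [exact: fK | exact: gK].
Qed.

Lemma atom1 n (j : 'I_n) : ba_atom ([set j] : {set 'I_n}).
Proof. by rewrite atomSet; apply/existsP; exists j. Qed.

Lemma eta_part n (v : V n) : partb (B := {set 'I_n}) [ffun a => [set i | v i == a]].
Proof.
apply: partb_atoms => [al|al a b]; rewrite atomSet => /existsP [j /eqP ->].
  by exists (v j); rewrite ffunE leSet sub1set inE.
by rewrite !ffunE !leSet !sub1set !inE => /eqP <- /eqP.
Qed.

Lemma in_pv n (p : Gcar {set 'I_n}) j a : (pv (val p) [set j] == a) = (j \in val p a).
Proof. by rewrite -pvP ?(valP p) ?atom1 // leSet sub1set. Qed.

Lemma pv_eta n (v : V n) i : pv [ffun a => [set i | v i == a]] [set i] = v i.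
Proof. by apply/eqP; rewrite -pvP ?eta_part ?atom1 // ffunE leSet sub1set inE. Qed.

Definition eta0 (X : OV) (x : ov_car X) : Gcar {set 'I_(oN X)} :=
  exist (fun q : {ffun A -> {set 'I_(oN X)}} => partb q) _ (eta_part (oPhi X x)).

Arguments eta0 : clear implicits.
Lemma eta_emb (X : OV) : ov_embedding (X := X) (Y := GB (FB X)) (eta0 X).
Proof.
split.
  move=> x y /(congr1 val) /= E; apply: (can_inj (oPhiK (X:=X))); apply/ffunP => i.
  move/ffunP: E => /(_ (oPhi X x i)); rewrite !ffunE => /setP /(_ i); rewrite !inE eqxx.
  by move/esym/eqP.
split.
  move=> o xs; apply: val_inj; apply/ffunP => a; apply/setP => i.
  rewrite /= ffunE inE (oPhi_pres (X:=X)) /pow_ops ffunE.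
  rewrite -sub1set -leSet opsF_atom ?atom1 //; last by move=> j; exact: eta_part.
  suff -> : (fun j => pv (val (eta0 X (xs j))) [set i]) = (fun j => oPhi X (xs j) i) by [].
  by apply: functional_extensionality => j; rewrite pv_eta.
move=> x y; rewrite (oLe (X:=X)) /= /Gle /= meetSet complSet.
rewrite (DL_alb (oPi X) (x:=oPhi X x) (y:=oPhi X y)) //.
- move=> i; rewrite -sub1set -leSet Dm_atom ?eta_part ?atom1 //; by rewrite !pv_eta.
- move=> i; rewrite -sub1set -leSet Lm_atom ?eta_part ?atom1 //; by rewrite !pv_eta.
Qed.

Definition eta (X : OV) : OVhom X (GB (FB X)) := exist _ (eta0 X) (eta_emb X).

Lemma eta_bij (X : OV) : bijective (proj1_sig (eta X)).
Proof.
pose g (p : Gcar {set 'I_(oN X)}) : ov_car X := oPsi X [ffun i => pv (val p) [set i]].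
have etag : cancel g (eta0 X).
  move=> p; apply: val_inj; apply/ffunP => a; apply/setP => i.
  by rewrite /= ffunE inE oPsiK ffunE in_pv.
exists g => //= x; apply: (eta_emb X).1; by rewrite etag.
Qed.

Definition delta (a c : A) := if c == a then z1 else z0.

Lemma eta_nat (X Y : OV) (f : OVhom X Y) :
  OVcomp (Gmap (Fmap f)) (eta X) = OVcomp (eta Y) f.
Proof.
apply: sig_fun_eq => x /=; apply: val_inj; apply/ffunP => a; rewrite /= !ffunE.
apply/setP => j; rewrite /Fmap0 !inE.
have -> : ind [set i | oPhi X x i == a] = [ffun i => delta a (oPhi X x i)].
  by apply/ffunP => i; rewrite !ffunE inE.
rewrite (pw_un (cg_pres f)) ffunE /cg /= oPhiK /delta.
by case: (oPhi Y (sval f x) j == a); rewrite ?eqxx // (negbTE z01).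
Qed.

Section Eps.
Variable B : OFBAobj.
Local Notation BB := (ba_car B).
Local Notation G := (GB B).

Definition eps0 (S : {set 'I_(oN G)}) : BB := val (oPsi G (ind S)) z1.

Definition theta : V (oN G) -> V (nB B) := psi (B:=B) \o oPsi G.

Lemma theta_pres : preserves_ops (pw (oN G)) (pw (nB B)) theta.
Proof. apply: pres_comp; [exact: oPsi_pres | exact: psi_pres]. Qed.

Lemma theta_inj : injective theta.
Proof. move=> x y /(can_inj (psiK (B:=B))); exact: (can_inj (oPsiK (X:=G))). Qed.

Lemma chi_eps S : chi (eps0 S) = theta (ind S).
Proof.
rewrite [RHS](hom_ind theta_pres) /chi; congr ind; apply/setP => k; rewrite !inE.
rewrite /theta /= ffunE pvP ?at_atom //; exact: valP.
Qed.

Lemma chi_inj : injective (chi (B:=B)).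
Proof. by move=> x y /ind_inj /cs_inj. Qed.

Lemma theta_le x y : alb 1 (theta x) (theta y) = alb (oPi G) x y.
Proof.
rewrite /theta /=; apply/idP/idP => h.
  rewrite -(oPsiK (X:=G) x) -(oPsiK (X:=G) y); apply/oLe; exact/psi_le.
by apply/psi_le; apply/(oLe (X:=G)); rewrite !oPsiK.
Qed.

Lemma eps_emb : ofba_embedding (X := FB G) (Y := B) eps0.
Proof.
split.
  by move=> S T E; apply: ind_inj; apply: theta_inj; rewrite -!chi_eps E.
split.
  move=> S T; apply: chi_inj; rewrite /= meetSet chi_eps ind_and (pw_bin theta_pres).
  by rewrite /chi cs_meet ind_and -!chi_eps.
split.
  move=> S T; apply: chi_inj; rewrite /= joinSet chi_eps ind_or (pw_bin theta_pres).
  by rewrite /chi cs_join ind_or -!chi_eps.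
split.
  move=> S; apply: chi_inj; rewrite /= complSet chi_eps ind_not (pw_un theta_pres).
  by rewrite /chi cs_compl ind_not -!chi_eps.
split.
  by apply: chi_inj; rewrite /= botSet chi_eps ind_set0 (pw_const theta_pres) /chi cs_bot ind_set0.
split.
  by apply: chi_inj; rewrite /= topSet chi_eps ind_setT (pw_const theta_pres) /chi cs_top ind_setT.
by move=> S T /=; rewrite ord_chi !chi_eps theta_le.
Qed.

Definition eps : OFBAhom (FB G) B := exist _ eps0 eps_emb.

Lemma eps_bij : bijective (proj1_sig eps).
Proof.
pose thinv : V (nB B) -> V (oN G) := oPhi G \o psiinv (B:=B).
have thinv_pres : preserves_ops (pw (nB B)) (pw (oN G)) thinv.
  apply: pres_comp; last exact: oPhi_pres.
  exact: pres_inv (psi_pres (B:=B)) (psiK (B:=B)) (psiinvK (B:=B)).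
have thK : cancel thinv theta by move=> v; rewrite /thinv /theta /= oPhiK psiinvK.
pose g (x : BB) : {set 'I_(oN G)} := [set i | thinv (chi x) i == z1].
have gK : cancel g eps0.
  move=> x; apply: chi_inj; rewrite chi_eps /g {1 2}/chi -(hom_ind thinv_pres).
  exact: thK.
exists g => //= S; apply: (eps_emb.1); by rewrite gK.
Qed.

End Eps.

Lemma eps_nat (B B' : OFBAobj) (h : OFBAhom B B') :
  OFBAcomp (eps B') (Fmap (Gmap h)) = OFBAcomp h (eps B).
Proof.
apply: sig_fun_eq => S /=; rewrite /eps0 (ind_Fmap (Gmap h)) /cg /= oPhiK.
by rewrite ffunE.
Qed.

Theorem main_equiv : cat_equivalent (OVfin opsA ltA) OFBA.
Proof.
exists FunF, FunG; split.
  exists eta; split.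
    move=> X Y f; exact: eta_nat.
  move=> X; apply: iso_OV; exact: eta_bij.
exists eps; split.
  move=> B B' h; exact: eps_nat.
move=> B; apply: iso_OFBA; exact: eps_bij.
Qed.
End Main.

Theorem theorem4p2 (Op : Type) (ar : Op -> nat) (A : finType)
    (opsA : ops_on ar A) (ltA : rel A) :
  primal opsA -> strict_linear ltA ->
  cat_equivalent (OVfin opsA ltA) OFBA.
Proof.
move=> Hp Hl.
have [z0 [z1 Hz]] : exists z0 z1, ltA z0 z1.
  case: Hp => /card_gt1P [x [y [_ _ ne]]] _.
  case: Hl => _ [_ tot]; case/orP: (tot x y ne) => h; by [exists x, y | exists y, x].
exact: (main_equiv Hp Hl Hz).
Qed.
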